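(* Assume $C^\top C\succ0$ and that $r_1$ is proper (i.e. some $\widetilde W$ has $r_1(\widetilde W)<\infty$). Let $\gamma>0$ and let $\sigma_i\downarrow0$ be a decreasing sequence of positive numbers. With $H_\sigma$ and $H$ as in the context: 1. $\inf H_{\sigma_i}\to\inf H$. 2. There is a set $N\subseteq\mathbb{N}$ with $\mathbb{N}\setminus N$ finite such that for $v\in N$ the sets $\operatorname{argmin}H_{\sigma_v}$ are nonempty and form a bounded sequence, and $\limsup_{v}(\operatorname{argmin}H_{\sigma_v})\subseteq\operatorname{argmin}H$. 3. For any sequence $\epsilon_i\downarrow0$ and any choice $\widetilde W_i\in\epsilon_i\text{-}\operatorname{argmin}H_{\sigma_i}:=\{\widetilde W: H_{\sigma_i}(\widetilde W)\le\inf H_{\sigma_i}+\epsilon_i\}$, the sequence $(\widetilde W_i)$ is bounded and all its cluster points belong to $\operatorname{argmin}H$.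
   Context: Let $n,m,M\ge1$, $p=m+n$. For $i=1,\dots,M$ let $A_i\in\mathbb{R}^{n\times n}$, $B_{2,i}\in\mathbb{R}^{n\times m}$, $F_i=\begin{bmatrix}A_i&B_{2,i}\\0&0\end{bmatrix}$. Let $B_1\in\mathbb{R}^{n\times l}$, $C\in\mathbb{R}^{q\times n}$, $D\in\mathbb{R}^{q\times m}$ with $C^\top D=0$, $D^\top D\succ0$, $B_1B_1^\top\succ0$; $Q=\begin{bmatrix}B_1B_1^\top&0\\0&0\end{bmatrix}$, $R=\begin{bmatrix}C^\top C&0\\0&D^\top D\end{bmatrix}$, $V_1=[0,\ I_m]\in\mathbb{R}^{m\times p}$, $V_2=[I_n,\ 0]\in\mathbb{R}^{n\times p}$, $\Psi_i(W)=-V_2(F_iW+WF_i^\top+Q)V_2^\top$. $\mathrm{vec}$ is column-stacking, so $(V_2\otimes V_1)\mathrm{vec}(W)=\mathrm{vec}(V_1WV_2^\top)\in\mathbb{R}^{mn}$. $\Gamma^k_+=\{\mathrm{vec}(X):X\in\mathbb{S}^k_+\}$, $\delta_S$ the indicator of $S$, $\Omega=\{\mathrm{vec}(W):W_{ij}=0\ \text{for }1\le i<j\le n\}$. For $\widetilde W=\mathrm{vec}(W)\in\mathbb{R}^{p^2}$: $r_1(\widetilde W)=\langle\mathrm{vec}(R),\widetilde W\rangle+\delta_{\Gamma^p_+}(\widetilde W)+\sum_{i=1}^M\delta_{\Gamma^n_+}(\mathrm{vec}(\Psi_i(W)))+\delta_\Omega(\widetilde W)$. For $\sigma>0$ and $t\in\mathbb{R}$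 let $f_\sigma(t)=1-e^{-t/\sigma}$, and for $x\in\mathbb{R}^{mn}$, $f_\sigma(|x|)=\sum_kf_\sigma(|x_k|)$. Define $H_\sigma(\widetilde W)=r_1(\widetilde W)+\gamma f_\sigma(|(V_2\otimes V_1)\widetilde W|)$ and $H(\widetilde W)=r_1(\widetilde W)+\gamma\|(V_2\otimes V_1)\widetilde W\|_0$, where $\|\cdot\|_0$ counts nonzero entries. For a sequence of sets $S_v$, $\limsup_vS_v$ is the outer limit: the set of cluster points of sequences $(s_v)$ with $s_v\in S_v$ along a subsequence. *)

(* Defs.v *)
From HB Require Import structures.
From mathcomp Require Import all_boot all_order all_algebra.
From mathcomp Require Import all_classical all_reals all_analysis.
Set Implicit Arguments. Unset Strict Implicit. Unset Printing Implicit Defensive.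
Import Order.TTheory GRing.Theory Num.Theory.
Import numFieldNormedType.Exports.
Local Open Scope classical_set_scope.
Local Open Scope ring_scope.

Section Defs.
Variable R : realType.

Definition psd k (X : 'M[R]_k) : Prop :=
  X^T = X /\ forall x : 'cV[R]_k, 0 <= (x^T *m X *m x) 0 0.
Definition pd k (X : 'M[R]_k) : Prop :=
  X^T = X /\ forall x : 'cV[R]_k, x != 0 -> 0 < (x^T *m X *m x) 0 0.

Variables (n m M l q : nat).
Variables (A : 'I_M -> 'M[R]_n) (B2 : 'I_M -> 'M[R]_(n, m)).
Variables (B1 : 'M[R]_(n, l)) (C : 'M[R]_(q, n)) (D : 'M[R]_(q, m)).

(* p = n + m; block ordering: first n (state) then m (input) coordinates *)
Definition Fmat (i : 'I_M) : 'M[R]_(n + m) := block_mx (A i) (B2 i) 0 0.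
Definition Qmat : 'M[R]_(n + m) := block_mx (B1 *m B1^T) 0 0 0.
Definition Rmat : 'M[R]_(n + m) := block_mx (C^T *m C) 0 0 (D^T *m D).
Definition V1 : 'M[R]_(m, n + m) := row_mx 0 1%:M.
Definition V2 : 'M[R]_(n, n + m) := row_mx 1%:M 0.
Definition Psi (i : 'I_M) (W : 'M[R]_(n + m)) : 'M[R]_n :=
  - (V2 *m (Fmat i *m W + W *m (Fmat i)^T + Qmat) *m V2^T).

Definition in_Omega (W : 'M[R]_(n + m)) : Prop :=
  forall i j : 'I_n, (i < j)%N -> W (lshift m i) (lshift m j) = 0.

Definition inner (W : 'M[R]_(n + m)) : R :=
  \sum_(i < n + m) \sum_(j < n + m) Rmat i j * W i j.

Definition r1 (W : 'M[R]_(n + m)) : \bar R :=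
  if `[< psd W /\ (forall i, psd (Psi i W)) /\ in_Omega W >]
  then (inner W)%:E else +oo%E.

(* (V2 ⊗ V1) vec W = vec (V1 W V2^T); its entries are those of V1 W V2^T *)
Definition Kx (W : 'M[R]_(n + m)) : 'M[R]_(m, n) := V1 *m W *m V2^T.

Definition fsig (s t : R) : R := 1 - expR (- (t / s)).

Definition fsum (s : R) (x : 'M[R]_(m, n)) : R :=
  \sum_(i < m) \sum_(j < n) fsig s `|x i j|.

Definition l0 (x : 'M[R]_(m, n)) : nat :=
  (\sum_(i < m) \sum_(j < n) (x i j != 0%R : nat))%N.

Definition Hsig (gamma s : R) (W : 'M[R]_(n + m)) : \bar R :=
  (r1 W + (gamma * fsum s (Kx W))%:E)%E.

Definition Hl0 (gamma : R) (W : 'M[R]_(n + m)) : \bar R :=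
  (r1 W + (gamma * (l0 (Kx W))%:R)%:E)%E.

End Defs.

Definition inf_of (R : realType) (T : Type) (f : T -> \bar R) : \bar R :=
  ereal_inf (range f).

(* argmin in the Rockafellar--Wets sense: points attaining a finite infimum *)
Definition argmin (R : realType) (T : Type) (f : T -> \bar R) : set T :=
  [set x | f x = inf_of f /\ (f x < +oo)%E].

Definition eps_argmin (R : realType) (T : Type) (eps : R) (f : T -> \bar R) : set T :=
  [set x | (f x <= inf_of f + eps%:E)%E].

Definition bounded_in (R : realType) (V : normedModType R) (S : set V) : Prop :=
  exists B : R, forall x, S x -> `|x| <= B.

Definition cluster_point (R : realType) (V : normedModType R) (u : nat -> V) (x : V) : Prop :=
  exists phi : nat -> nat, (forall k, (phi k < phi k.+1)%N) /\
    (fun k => u (phi k)) @ \oo --> x.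

Definition outer_limit (R : realType) (V : normedModType R) (S : nat -> set V) : set V :=
  [set x | exists phi : nat -> nat, (forall k, (phi k < phi k.+1)%N) /\
    exists s : nat -> V, (forall k, S (phi k) (s k)) /\ s @ \oo --> x].

(* Main.v *)
Require Import Defs.
From HB Require Import structures.
From mathcomp Require Import all_boot all_order all_algebra.
From mathcomp Require Import all_classical all_reals all_analysis.
From mathcomp Require Import lra ring.
Import Order.TTheory GRing.Theory Num.Theory.
Import numFieldNormedType.Exports.
Local Open Scope classical_set_scope.
Local Open Scope ring_scope.

Set Implicit Arguments. Unset Strict Implicit. Unset Printing Implicit Defensive.

Section Helpers.
Variable R : realType.

Lemma incr_ge (phi : nat -> nat) : (forall k, (phi k < phi k.+1)%N) -> forall k, (k <= phi k)%N.
Proof. move=> h; elim=> [|k ih] //; exact: leq_ltn_trans ih (h k). Qed.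

Lemma incr_mono (phi : nat -> nat) : (forall k, (phi k < phi k.+1)%N) ->
  forall i j, (i <= j)%N -> (phi i <= phi j)%N.
Proof.
move=> h i j; elim: j => [|j ih]; first by rewrite leqn0 => /eqP->.
rewrite leq_eqVlt => /orP[/eqP->//|]; rewrite ltnS => /ih hi.
exact: leq_trans hi (ltnW (h j)).
Qed.

Lemma incr_cvg (phi : nat -> nat) : (forall k, (phi k < phi k.+1)%N) ->
  phi @ \oo --> \oo.
Proof.
move=> h P [N _ HP]; exists N => // k /= hk; apply: HP.
have := leq_trans hk (incr_ge h k); exact.
Qed.

Lemma cvg_subseq {V : normedModType R} (u : nat -> V) (x : V) (phi : nat -> nat) :
  (forall k, (phi k < phi k.+1)%N) -> u @ \oo --> x -> (fun k => u (phi k)) @ \oo --> x.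
Proof. move=> h ux; exact: cvg_comp (incr_cvg h) ux. Qed.

Lemma cvg_sum_seq (I : Type) (r : seq I) (g : I -> nat -> R) (L : I -> R) :
  (forall i, g i @ \oo --> L i) ->
  (fun k => \sum_(i <- r) g i k) @ \oo --> \sum_(i <- r) L i.
Proof.
move=> h; elim: r => [|i r ih].
  rewrite big_nil; under eq_cvg do rewrite big_nil; exact: cvg_cst.
rewrite big_cons; under eq_cvg do rewrite big_cons.
exact: cvgD.
Qed.

Lemma le_lim_near (g : nat -> R) (L a : R) :
  g @ \oo --> L -> (forall e, 0 < e -> \forall k \near \oo, g k <= a + e) -> L <= a.
Proof.
move=> gL h; apply/ler_addgt0Pr => e e0.
have e20 : 0 < e / 2 by rewrite divr_gt0.
have h1 := h _ e20.
have h2 := cvgr_gt L gL (L - e / 2).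
have : L - e/2 < L by rewrite ltrBlDr ltrDl.
move=> /h2 {}h2.
have [k [hk1 hk2]] : exists k, g k <= a + e/2 /\ L - e/2 < g k.
  have [N _ HN] := filterI h1 h2; exists N; exact: (HN N (leqnn N)).
have : L - e/2 < a + e/2 by exact: lt_le_trans hk2 hk1.
move=> H; lra.
Qed.

Lemma ge_lim_near (g : nat -> R) (L a : R) :
  g @ \oo --> L -> (\forall k \near \oo, a <= g k) -> a <= L.
Proof.
move=> gL h; rewrite -lerN2; apply: (@le_lim_near (fun k => - g k)).
  exact: cvgN.
move=> e e0; apply: filterS h => k hk; rewrite lerNl opprD opprK.
lra.
Qed.


Section Abstract.
Variables (V : normedModType R) (f : nat -> V -> \bar R) (F : V -> \bar R).
Hypothesis BW : forall (u : nat -> V) (B : R), (forall k, `|u k| <= B) ->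
  exists phi : nat -> nat, (forall k, (phi k < phi k.+1)%N) /\
    exists X : V, (fun k => u (phi k)) @ \oo --> X.
Hypothesis f0 : forall j W, (0 <= f j W)%E.
Hypothesis fmono : forall j W, (f j W <= f j.+1 W)%E.
Hypothesis fleF : forall j W, (f j W <= F W)%E.
Hypothesis Fsup : forall W (c : R), (forall j, (f j W <= c%:E)%E) -> (F W <= c%:E)%E.
Hypothesis flsc : forall j (u : nat -> V) (X : V) (c : R), u @ \oo --> X ->
  (forall e, 0 < e -> \forall k \near \oo, (f j (u k) <= (c + e)%:E)%E) ->
  (f j X <= c%:E)%E.
Hypothesis fcoer : forall c : R, exists B, forall W, (f 0 W <= c%:E)%E -> `|W| <= B.
Hypothesis Fprop : exists W, (F W < +oo)%E.

Lemma fmonoN i j W : (i <= j)%N -> (f i W <= f j W)%E.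
Proof.
move=> /subnK <-; elim: (j - i)%N => [|k ih] //.
rewrite addSn; exact: le_trans ih (fmono _ _).
Qed.

Lemma inf_le j W : (inf_of (f j) <= f j W)%E.
Proof. by apply: ereal_inf_lbound; exists W. Qed.

Lemma inf_ge0 j : (0 <= inf_of (f j))%E.
Proof. by apply: le_ereal_inf_tmp => y [W _ <-]; exact: f0. Qed.

Lemma infF_ge0 : (0 <= inf_of F)%E.
Proof. by apply: le_ereal_inf_tmp => y [W _ <-]; exact: le_trans (f0 0 W) (fleF 0 W). Qed.

Lemma inf_le_infF j : (inf_of (f j) <= inf_of F)%E.
Proof.
apply: le_ereal_inf_tmp => y [W _ <-]; exact: le_trans (inf_le j W) (fleF j W).
Qed.

Lemma infF_lt : (inf_of F < +oo)%E.
Proof.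
have [W0 hW0] := Fprop; apply: le_lt_trans hW0.
by apply: ereal_inf_lbound; exists W0.
Qed.

Let a := fine (inf_of F).
Let b j := fine (inf_of (f j)).

Lemma infFE : inf_of F = a%:E.
Proof. by rewrite /a fineK // ge0_fin_numE ?infF_ge0 ?infF_lt. Qed.

Lemma infE j : inf_of (f j) = (b j)%:E.
Proof.
rewrite /b fineK // ge0_fin_numE ?inf_ge0 //.
exact: le_lt_trans (inf_le_infF j) infF_lt.
Qed.

Lemma b_le_a j : b j <= a.
Proof. by rewrite -lee_fin -infE -infFE inf_le_infF. Qed.

Lemma b_mono i j : (i <= j)%N -> b i <= b j.
Proof.
move=> ij; rewrite -lee_fin -!infE.
apply: le_ereal_inf_tmp => y [W _ <-]; exact: le_trans (inf_le i W) (fmonoN W ij).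
Qed.

Lemma KL (phi : nat -> nat) (u : nat -> V) X (c : R) (e : nat -> R) :
  (forall k, (phi k < phi k.+1)%N) -> e @ \oo --> 0 -> u @ \oo --> X ->
  (forall k, (f (phi k) (u k) <= (c + e k)%:E)%E) -> (F X <= c%:E)%E.
Proof.
move=> hphi he hu hf; apply: Fsup => j; apply: (flsc hu) => eps eps0.
have [N1 _ H1] := cvgr_le 0 he eps eps0.
exists (maxn N1 j) => // k /= hk.
have hjk : (j <= phi k)%N.
  apply: leq_trans (incr_ge hphi k); exact: leq_trans (leq_maxr N1 j) hk.
apply: le_trans (fmonoN (u k) hjk) _; apply: le_trans (hf k) _.
rewrite lee_fin lerD2l; apply: H1 => /=; exact: leq_trans (leq_maxl N1 j) hk.
Qed.

Lemma argminF X : (F X <= a%:E)%E -> argmin F X.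
Proof.
move=> h; split; last by apply: le_lt_trans h _; exact: ltry.
rewrite infFE; apply/le_anti; rewrite h /= -infFE.
by apply: ereal_inf_lbound; exists X.
Qed.

Lemma near_min j k : exists W, (f j W <= (b j + harmonic k)%:E)%E.
Proof.
have : (inf_of (f j) < (b j + harmonic k)%:E)%E.
  by rewrite infE lte_fin ltrDl harmonic_gt0.
move=> /ereal_inf_lt [y [W _ <-] hy]; exists W; exact: ltW.
Qed.

Lemma harm_le1 k : harmonic k <= 1 :> R.
Proof. by rewrite /= invf_le1 // ler1n. Qed.

Lemma argmin_ex v : exists X, argmin (f v) X.
Proof.
have /choice [W hW] := near_min v.
have [B hB] := fcoer (a + 1).
have hB' : forall k, `|W k| <= B.
  move=> k; apply: hB; apply: le_trans (fmonoN _ (leq0n v)) _.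
  apply: le_trans (hW k) _; rewrite lee_fin lerD ?b_le_a ?harm_le1 //.
have [phi [hphi [X hX]]] := BW hB'.
exists X.
have hXle : (f v X <= (b v)%:E)%E.
  apply: (flsc hX) => e e0.
  have [N1 _ H1] := cvgr_le 0 (cvg_subseq hphi (@cvg_harmonic R)) e e0.
  exists N1 => // k /= hk; apply: le_trans (hW _) _.
  by rewrite lee_fin lerD2l; exact: H1.
split; last by apply: le_lt_trans hXle _; exact: ltry.
by apply/le_anti; rewrite infE hXle /= -infE inf_le.
Qed.

Lemma item1 : (fun i => inf_of (f i)) @ \oo --> inf_of F.
Proof.
have -> : (fun i => inf_of (f i)) = (fun i => (b i)%:E).
  by apply/funext => i; rewrite infE.
rewrite infFE; apply/fine_cvgP; split; first by apply: nearW => k.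
apply/cvgrPdist_lt => e e0.
have [i0 hi0] : exists i0, a - e < b i0.
  have [//|hno] := pselect (exists i0, a - e < b i0); exfalso.
  have hle : forall i, b i <= a - e.
    by move=> i; rewrite leNgt; apply/negP => h; apply: hno; exists i.
  have /choice [W hW] : forall k, exists W, (f k W <= (b k + harmonic k)%:E)%E
    by move=> k; exact: near_min.
  have [B hB] := fcoer (a + 1).
  have hB' : forall k, `|W k| <= B.
    move=> k; apply: hB; apply: le_trans (fmonoN _ (leq0n k)) _.
    apply: le_trans (hW k) _; rewrite lee_fin lerD ?b_le_a ?harm_le1 //.
  have [phi [hphi [X hX]]] := BW hB'.
  have : (F X <= (a - e)%:E)%E.
    apply: (KL hphi (cvg_subseq hphi (@cvg_harmonic R)) hX) => k.
    apply: le_trans (hW _) _; rewrite lee_fin lerD2r; exact: hle.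
  have : (inf_of F <= F X)%E by apply: ereal_inf_lbound; exists X.
  rewrite infFE => h1 h2; have := le_trans h1 h2; rewrite lee_fin; lra.
exists i0 => // k /= hk.
have := b_mono hk; have := b_le_a k; rewrite /=.
move=> h1 h2; rewrite ger0_norm ?subr_ge0 //; lra.
Qed.

Lemma item2 : exists N : set nat, finite_set (~` N) /\
        (forall v, N v -> argmin (f v) !=set0) /\
        bounded_in (\bigcup_(v in N) argmin (f v)) /\
        outer_limit (fun v => argmin (f v)) `<=` argmin F.
Proof.
exists setT; split; first by rewrite setCT; exact: finite_set0.
split; first by move=> v _; have [X hX] := argmin_ex v; exists X.
split.
  have [B hB] := fcoer a; exists B => x [v _ [hx _]]; apply: hB.
  apply: le_trans (fmonoN _ (leq0n v)) _; rewrite hx infE lee_fin; exact: b_le_a.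
move=> x [phi [hphi [s [hs sx]]]]; apply: argminF.
apply: (KL hphi (cvg_cst 0) sx) => k.
by have [-> _] := hs k; rewrite infE addr0 lee_fin b_le_a.
Qed.

Lemma item3 (eps : nat -> R) :
  (forall i, 0 <= eps i) -> (forall i, eps i.+1 <= eps i) -> eps @ \oo --> 0 ->
  forall Wt : nat -> V, (forall i, eps_argmin (eps i) (f i) (Wt i)) ->
  bounded_in (range Wt) /\ (forall X, cluster_point Wt X -> argmin F X).
Proof.
move=> e0 emono econv Wt hWt.
have epsle : forall i, eps i <= eps 0.
  by elim=> [|i ih] //; exact: le_trans (emono i) ih.
have hW : forall i, (f i (Wt i) <= (a + eps i)%:E)%E.
  move=> i; apply: le_trans (hWt i) _; rewrite infE lee_fin lerD2r; exact: b_le_a.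
split.
  have [B hB] := fcoer (a + eps 0); exists B => x [i _ <-]; apply: hB.
  apply: le_trans (fmonoN _ (leq0n i)) _; apply: le_trans (hW i) _.
  by rewrite lee_fin lerD2l.
move=> X [phi [hphi cX]]; apply: argminF.
exact: (KL hphi (cvg_subseq hphi econv) cX (fun k => hW (phi k))).
Qed.

End Abstract.
End Helpers.

Section Mx.
Variable R : realType.
Variables (a b : nat).

Lemma entry_le (M : 'M[R]_(a, b)) i j : `|M i j| <= `|M|.
Proof.
have /mapP[ij Hj ->] : `|M i j| \in [seq `|M x.1 x.2| | x : 'I_a * 'I_b].
  by apply/mapP; exists (i, j) => //=; rewrite mem_enum.
by rewrite [leRHS]/Num.Def.normr /= mx_normrE; apply/bigmax_geP; right => /=; exists ij.
Qed.

Lemma norm_lt_entries (M : 'M[R]_(a, b)) e : 0 < e -> (forall i j, `|M i j| < e) -> `|M| < e.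
Proof.
move=> e0 h; rewrite [ltLHS]/Num.Def.normr /= mx_normrE.
apply: (big_ind (fun y => y < e)) => //.
  by move=> x y hx hy; rewrite gt_max hx hy.
Qed.

Lemma mx_cvg_entries (u : nat -> 'M[R]_(a, b)) (X : 'M[R]_(a, b)) :
  (forall i j, (fun k => u k i j) @ \oo --> X i j) -> u @ \oo --> X.
Proof.
move=> h; apply/cvgrPdist_lt => e e0.
have : \forall k \near \oo, forall ij : 'I_a * 'I_b, `|X ij.1 ij.2 - u k ij.1 ij.2| < e.
  apply: filter_forall => -[i j] /=; move/cvgrPdist_lt : (h i j) => /(_ e e0); exact.
apply: filterS => k hk; apply: norm_lt_entries => // i j; rewrite !mxE.
exact: (hk (i, j)).
Qed.

Lemma mx_entries_cvg (u : nat -> 'M[R]_(a, b)) (X : 'M[R]_(a, b)) :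
  u @ \oo --> X -> forall i j, (fun k => u k i j) @ \oo --> X i j.
Proof.
move=> /cvgrPdist_lt h i j; apply/cvgrPdist_lt => e e0.
apply: filterS (h e e0) => k hk; apply: le_lt_trans hk.
by have := entry_le (X - u k) i j; rewrite !mxE.
Qed.

Lemma BW_seq (s : seq ('I_a * 'I_b)) (u : nat -> 'M[R]_(a, b)) (B : R) :
  (forall k, `|u k| <= B) ->
  exists phi : nat -> nat, (forall k, (phi k < phi k.+1)%N) /\
    forall ij, ij \in s -> cvgn (fun k => u (phi k) ij.1 ij.2).
Proof.
move=> hB; elim: s => [|ij s [phi [hphi hc]]].
  by exists id; split => //.
set r := fun k => u (phi k) ij.1 ij.2.
have br : bounded_fun r.
  exists B; split; first exact: num_real.
  move=> M hM x _; apply: le_trans (entry_le _ _ _) _; apply: le_trans (hB _) _.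
  exact: ltW.
have [psi hpsi hcv] := bolzano_weierstrass br.
have hpsi' : forall k, (psi k < psi k.+1)%N.
  by move=> k; have := (increasing_seqP psi).2 hpsi k.
exists (fun k => phi (psi k)); split.
  move=> k; apply: leq_trans (hphi (psi k)) _; exact: incr_mono hphi _ _ (hpsi' k).
move=> ij'; rewrite inE => /orP[/eqP->|hin].
  exact: hcv.
have /cvg_ex [l hl] := hc ij' hin.
apply/cvg_ex; exists l; exact: (cvg_subseq hpsi' hl).
Qed.

Lemma BW_mx (u : nat -> 'M[R]_(a, b)) (B : R) : (forall k, `|u k| <= B) ->
  exists phi : nat -> nat, (forall k, (phi k < phi k.+1)%N) /\
    exists X : 'M[R]_(a, b), (fun k => u (phi k)) @ \oo --> X.
Proof.
move=> hB; have [phi [hphi hc]] := BW_seq (enum [set: 'I_a * 'I_b]) hB.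
have /choice [L hL] : forall ij : 'I_a * 'I_b,
    exists l : R, (fun k => u (phi k) ij.1 ij.2) @ \oo --> l.
  by move=> ij; apply/cvg_ex; apply: hc; rewrite mem_enum in_setT.
exists phi; split => //; exists (\matrix_(i, j) L (i, j)).
apply: mx_cvg_entries => i j; rewrite mxE; exact: (hL (i, j)).
Qed.
End Mx.

Section LinAlg.
Variable R : realType.

Definition bf k (V : 'M[R]_k) (x y : 'cV[R]_k) : R := (x^T *m V *m y) 0 0.

Lemma bf_expand k (V : 'M[R]_k) x y t :
  bf V (x + t *: y) (x + t *: y) =
  bf V x x + t * bf V x y + t * bf V y x + t * t * bf V y y.
Proof.
rewrite /bf !(mulmxDr, mulmxDl, linearD, linearZ) /=.
rewrite -?scalemxAl -?scalemxAr -?scalemxAl !mxE; ring.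
Qed.

Lemma bf_sym k (V : 'M[R]_k) x y : V^T = V -> bf V x y = bf V y x.
Proof.
move=> hs; rewrite /bf.
have e : ((x^T *m V *m y)^T) 0 0 = (x^T *m V *m y) 0 0 by rewrite mxE.
by rewrite -e !trmx_mul trmxK hs mulmxA.
Qed.

Lemma sumsq_eq0 k (y : 'cV[R]_k) : (y^T *m y) 0 0 = 0 -> y = 0.
Proof.
rewrite mxE => h; apply/matrixP => i j; rewrite (ord1 j) mxE.
have h' : \sum_(j < k) y j 0 ^+ 2 = 0.
  by rewrite -[X in _ = X]h; apply: eq_bigr => c _; rewrite mxE expr2.
have := psumr_eq0P (P := predT) (F := fun c => y c 0 ^+ 2) (fun c _ => sqr_ge0 (y c 0)) h'.
by move=> /(_ i isT) /eqP; rewrite sqrf_eq0 => /eqP.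
Qed.

Lemma sumsq_ge0 k (y : 'cV[R]_k) : 0 <= (y^T *m y) 0 0.
Proof.
rewrite mxE; apply: sumr_ge0 => c _; rewrite mxE -expr2; exact: sqr_ge0.
Qed.

Lemma psd_ker k (V : 'M[R]_k) x : psd V -> bf V x x = 0 -> V *m x = 0.
Proof.
move=> [hs hp] h0; set y := V *m x.
have hs1 : bf V x y = (y^T *m y) 0 0.
  by rewrite (bf_sym _ _ hs) /bf /y trmx_mul hs mulmxA.
have hs2 : bf V y x = (y^T *m y) 0 0 by rewrite /bf -mulmxA.
set s := (y^T *m y) 0 0 in hs1 hs2.
set Q := bf V y y.
have hQ : 0 <= Q by exact: hp.
set t := - s / (Q + 1).
have hQ1 : 0 < Q + 1 by lra.
have ht : t * (Q + 1) = - s by rewrite /t mulrVK // unitfE gt_eqF.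
have := hp (x + t *: y); rewrite -/(bf V _ _) bf_expand h0 hs1 hs2 -/Q => hpos.
have hs0 : s = 0.
  have hs_ge : 0 <= s by exact: sumsq_ge0.
  nra.
exact: sumsq_eq0.
Qed.

End LinAlg.

Section Gram.
Variable R : realType.
Variables (n m q : nat) (C : 'M[R]_(q, n)) (D : 'M[R]_(q, m)).

Definition Ch : 'M[R]_(q, n + m) := row_mx C 0.
Definition Dh : 'M[R]_(q, n + m) := row_mx 0 D.

Lemma Rmat_gram : Rmat C D = Ch^T *m Ch + Dh^T *m Dh.
Proof.
rewrite /Rmat /Ch /Dh !tr_row_mx !mul_col_row !trmx0 !mul0mx !mulmx0.
by rewrite add_block_mx !addr0 !add0r.
Qed.

Lemma gram_sum p (K : 'M[R]_(q, p)) (W : 'M[R]_p) :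
  \sum_i \sum_j (K^T *m K) i j * W i j = \sum_k bf W (col k K^T) (col k K^T).
Proof.
transitivity (\sum_k \sum_i \sum_j K k i * W i j * K k j).
  have e1 : forall i j, (K^T *m K) i j * W i j = \sum_k K k i * W i j * K k j.
    move=> i j; rewrite !mxE big_distrl; apply: eq_bigr => k _; rewrite !mxE; exact: mulrAC.
  under eq_bigr do under eq_bigr do rewrite e1.
  under eq_bigr do rewrite exchange_big.
  by rewrite exchange_big.
apply: eq_bigr => k _; symmetry; rewrite /bf mxE.
under eq_bigr do rewrite mxE big_distrl.
rewrite exchange_big; apply: eq_bigr => i _; apply: eq_bigr => j _.
by rewrite !mxE.
Qed.

Lemma inner_decomp (W : 'M[R]_(n + m)) : inner C D W =
  \sum_k bf W (col k Ch^T) (col k Ch^T) + \sum_k bf W (col k Dh^T) (col k Dh^T).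
Proof.
rewrite /inner Rmat_gram -!gram_sum -big_split; apply: eq_bigr => i _.
rewrite -big_split; apply: eq_bigr => j _; by rewrite mxE mulrDl.
Qed.

Lemma inner_ge0 (W : 'M[R]_(n + m)) : psd W -> 0 <= inner C D W.
Proof.
move=> [_ hp]; rewrite inner_decomp; apply: addr_ge0; apply: sumr_ge0 => k _; exact: hp.
Qed.

Lemma pd_ker k (K : 'M[R]_(q, k)) (x : 'cV[R]_k) : pd (K^T *m K) -> K *m x = 0 -> x = 0.
Proof.
move=> [_ hp] hKx; case: (eqVneq x 0) => // hx; have := hp x hx.
by rewrite !mulmxA -trmx_mul -mulmxA hKx mulmx0 mxE ltxx.
Qed.

Lemma pd_kerM k c (K : 'M[R]_(q, k)) (X : 'M[R]_(k, c)) : pd (K^T *m K) -> K *m X = 0 -> X = 0.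
Proof.
move=> hpd hKX; apply/matrixP => i j.
have hx : K *m col j X = 0.
  apply/matrixP => a b; have e : (K *m X) a j = 0 by rewrite hKX mxE.
  rewrite [RHS]mxE -[RHS]e !mxE; apply: eq_bigr => d _; by rewrite !mxE.
have := pd_ker hpd hx.
by move/matrixP/(_ i 0); rewrite !mxE.
Qed.

Lemma inner_eq0 (W : 'M[R]_(n + m)) : psd W -> pd (C^T *m C) -> pd (D^T *m D) ->
  inner C D W = 0 -> W = 0.
Proof.
move=> hW hC hD; rewrite inner_decomp => h0.
have [hs hp] := hW.
have g1 : 0 <= \sum_k bf W (col k Ch^T) (col k Ch^T) by apply: sumr_ge0 => k _; exact: hp.
have g2 : 0 <= \sum_k bf W (col k Dh^T) (col k Dh^T) by apply: sumr_ge0 => k _; exact: hp.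
have z1 : \sum_k bf W (col k Ch^T) (col k Ch^T) = 0 by lra.
have z2 : \sum_k bf W (col k Dh^T) (col k Dh^T) = 0 by lra.
have kill : forall K : 'M[R]_(q, n + m),
    \sum_k bf W (col k K^T) (col k K^T) = 0 -> K *m W = 0.
  move=> K z; apply/row_matrixP => k; rewrite row_mul row0.
  have hk := psumr_eq0P (P := predT) (F := fun k => bf W (col k K^T) (col k K^T))
    (fun k _ => hp _) z.
  have := psd_ker hW (hk k isT).
  have -> : row k K = (col k K^T)^T by rewrite tr_col trmxK.
  move=> h; by rewrite -[W]hs -trmx_mul h trmx0.
have hCW := kill _ z1; have hDW := kill _ z2.
rewrite -[W]vsubmxK /Ch mul_row_col mul0mx addr0 in hCW.
rewrite -[W]vsubmxK /Dh mul_row_col mul0mx add0r in hDW.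
by rewrite -[W]vsubmxK (pd_kerM hC hCW) (pd_kerM hD hDW) col_mx0.
Qed.
End Gram.

Section Conv.
Variable R : realType.

Definition econv a b (u : nat -> 'M[R]_(a, b)) (X : 'M[R]_(a, b)) :=
  forall i j, (fun k => u k i j) @ \oo --> X i j.

Lemma cvg_sum_ord c (g : 'I_c -> nat -> R) (L : 'I_c -> R) :
  (forall i, g i @ \oo --> L i) ->
  (fun k => \sum_(i < c) g i k) @ \oo --> \sum_(i < c) L i.
Proof. exact: cvg_sum_seq. Qed.

Lemma econv_of a b (u : nat -> 'M[R]_(a, b)) X : u @ \oo --> X -> econv u X.
Proof. exact: mx_entries_cvg. Qed.

Lemma econv_cst a b (X : 'M[R]_(a, b)) : econv (fun _ => X) X.
Proof. by move=> i j; exact: cvg_cst. Qed.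

Lemma econv_add a b (u v : nat -> 'M[R]_(a, b)) X Y :
  econv u X -> econv v Y -> econv (fun k => u k + v k) (X + Y).
Proof.
move=> hu hv i j; rewrite mxE; under eq_cvg do rewrite mxE; exact: cvgD.
Qed.

Lemma econv_opp a b (u : nat -> 'M[R]_(a, b)) X :
  econv u X -> econv (fun k => - u k) (- X).
Proof. move=> hu i j; rewrite mxE; under eq_cvg do rewrite mxE; exact: cvgN. Qed.

Lemma econv_mull a b c (A : 'M[R]_(c, a)) (u : nat -> 'M[R]_(a, b)) X :
  econv u X -> econv (fun k => A *m u k) (A *m X).
Proof.
move=> hu i j; rewrite mxE; under eq_cvg do rewrite mxE.
apply: cvg_sum_ord => d; apply: cvgM; [exact: cvg_cst | exact: hu].
Qed.

Lemma econv_mulr a b c (B : 'M[R]_(b, c)) (u : nat -> 'M[R]_(a, b)) X :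
  econv u X -> econv (fun k => u k *m B) (X *m B).
Proof.
move=> hu i j; rewrite mxE; under eq_cvg do rewrite mxE.
apply: cvg_sum_ord => d; apply: cvgM; [exact: hu | exact: cvg_cst].
Qed.

Lemma econv_tr a b (u : nat -> 'M[R]_(a, b)) X :
  econv u X -> econv (fun k => (u k)^T) X^T.
Proof. move=> hu i j; rewrite mxE; under eq_cvg do rewrite mxE; exact: hu. Qed.

Lemma bf_cvg a (u : nat -> 'M[R]_a) X x y :
  econv u X -> (fun k => bf (u k) x y) @ \oo --> bf X x y.
Proof. move=> hu; have h := econv_mulr (B := y) (econv_mull (A := x^T) hu); exact: h. Qed.

Lemma lim_ge0 (g : nat -> R) L : g @ \oo --> L -> (\forall k \near \oo, 0 <= g k) -> 0 <= L.
Proof. exact: ge_lim_near. Qed.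

Lemma lim_eq0 (g : nat -> R) L : g @ \oo --> L -> (\forall k \near \oo, g k = 0) -> L = 0.
Proof.
move=> hg h; apply/le_anti/andP; split.
  apply: (le_lim_near hg) => e e0; apply: filterS h => k ->; lra.
by apply: (ge_lim_near hg); apply: filterS h => k ->.
Qed.

Lemma psd_closed a (u : nat -> 'M[R]_a) X :
  econv u X -> (\forall k \near \oo, psd (u k)) -> psd X.
Proof.
move=> hu h; split.
  apply/matrixP => i j; rewrite mxE; apply/eqP; rewrite -subr_eq0; apply/eqP.
  apply: (@lim_eq0 (fun k => u k j i - u k i j)); first exact: cvgB.
  apply: filterS h => k [hs _]; have := congr1 (fun M : 'M[R]_a => M i j) hs.
  by rewrite mxE => ->; rewrite subrr.
move=> x; apply: (lim_ge0 (bf_cvg (x := x) (y := x) hu)); apply: filterS h => k [_ hp]; exact: hp.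
Qed.

End Conv.

Section Concrete.
Variable R : realType.
Variables (n m M l q : nat).
Variables (A : 'I_M -> 'M[R]_n) (B2 : 'I_M -> 'M[R]_(n, m)).
Variables (B1 : 'M[R]_(n, l)) (C : 'M[R]_(q, n)) (D : 'M[R]_(q, m)).
Hypothesis hC : pd (C^T *m C).
Hypothesis hD : pd (D^T *m D).

Definition feas (W : 'M[R]_(n + m)) : Prop :=
  psd W /\ (forall i, psd (Psi A B2 B1 i W)) /\ in_Omega W.

Lemma r1_add W t : (r1 A B2 B1 C D W + t%:E)%E =
  if `[< feas W >] then (inner C D W + t)%:E else +oo%E.
Proof. by rewrite /r1 /feas; case: ifP. Qed.

Lemma feas_closed (u : nat -> 'M[R]_(n + m)) X :
  u @ \oo --> X -> (\forall k \near \oo, feas (u k)) -> feas X.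
Proof.
move=> /econv_of hu h; split; last split.
- by apply: psd_closed hu _; apply: filterS h => k [].
- move=> i; apply: (@psd_closed _ _ (fun k => Psi A B2 B1 i (u k))); last first.
    by apply: filterS h => k [_ [hp _]].
  rewrite /Psi; apply: econv_opp; apply: econv_mulr; apply: econv_mull.
  apply: econv_add; last exact: econv_cst.
  apply: econv_add; [exact: econv_mull | exact: econv_mulr].
- move=> i j ij; apply: (@lim_eq0 _ (fun k => u k (lshift m i) (lshift m j))).
    exact: hu.
  by apply: filterS h => k [_ [_ ho]]; exact: ho.
Qed.

Lemma inner_cvg (u : nat -> 'M[R]_(n + m)) X :
  econv u X -> (fun k => inner C D (u k)) @ \oo --> inner C D X.
Proof.
move=> hu; rewrite /inner; apply: cvg_sum_ord => i; apply: cvg_sum_ord => j.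
apply: cvgM; [exact: cvg_cst | exact: hu].
Qed.

Lemma inner_Z a (W : 'M[R]_(n + m)) : inner C D (a *: W) = a * inner C D W.
Proof.
rewrite /inner mulr_sumr; apply: eq_bigr => i _; rewrite mulr_sumr.
by apply: eq_bigr => j _; rewrite [(a *: W) i j]mxE mulrCA.
Qed.

Lemma psdZ k a (W : 'M[R]_k) : 0 <= a -> psd W -> psd (a *: W).
Proof.
move=> a0 [hs hp]; split; first by rewrite linearZ /= hs.
move=> x; rewrite -scalemxAr -scalemxAl mxE; apply: mulr_ge0 => //; exact: hp.
Qed.


Lemma coer c : exists B, forall W : 'M[R]_(n + m), psd W -> inner C D W <= c -> `|W| <= B.
Proof.
have [//|hno] := pselect (exists B : R, forall W : 'M[R]_(n + m),
  psd W -> inner C D W <= c -> `|W| <= B).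
exfalso.
have hk : forall k : nat, exists W : 'M[R]_(n + m),
    psd W /\ inner C D W <= c /\ k.+1%:R < `|W|.
  move=> k; have [//|h'] := pselect (exists W : 'M[R]_(n + m),
    psd W /\ inner C D W <= c /\ k.+1%:R < `|W|).
  exfalso; apply: hno; exists k.+1%:R => W hW hi; rewrite leNgt; apply/negP => hlt.
  by apply: h'; exists W.
have /choice [W hW] := hk.
set c' := Num.max c 0.
have c'0 : 0 <= c' by rewrite le_max lexx orbT.
have cc' : c <= c' by rewrite le_max lexx.
have nW : forall k, 0 < `|W k|.
  by move=> k; have [_ [_ h]] := hW k; apply: lt_trans h; rewrite ltr0n.
set U := fun k => `|W k|^-1 *: W k.
have nU : forall k, `|U k| = 1.
  by move=> k; rewrite /U normrZ ger0_norm ?invr_ge0 ?ltW // mulVf // gt_eqF.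
have psdU : forall k, psd (U k).
  by move=> k; apply: psdZ; [rewrite invr_ge0 ltW | exact: (hW k).1].
have hU1 : forall k, `|U k| <= 1 by move=> k; rewrite nU.
have [phi [hphi [Y hY]]] := BW_mx hU1.
have eY := econv_of hY.
have psdY : psd Y by apply: psd_closed eY _; apply: nearW => k; exact: psdU.
have nY : 1 <= `|Y|.
  by apply: (ge_lim_near (cvg_norm hY)); apply: nearW => k; rewrite nU.
have iY : inner C D Y <= 0.
  apply: (le_lim_near (inner_cvg eY)) => e e0.
  have hh : (fun k => harmonic (phi k) * c') @ \oo --> 0.
    rewrite -(mul0r c'); apply: cvgM; last exact: cvg_cst.
    exact: (cvg_subseq hphi (@cvg_harmonic R)).
  have [N _ HN] := cvgr_le 0 hh e e0.
  exists N => // k /= hkN; have := HN k hkN.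
  rewrite /U inner_Z.
  have [_ [hi hl]] := hW (phi k).
  have hw := nW (phi k).
  have hinv : `|W (phi k)|^-1 <= harmonic (phi k).
    by rewrite /= lef_pV2 ?ltW // posrE ltr0n.
  have hinv0 : 0 < `|W (phi k)|^-1 by rewrite invr_gt0.
  move=> he; nra.
have : inner C D Y = 0 by apply/le_anti; rewrite iY inner_ge0.
move/(inner_eq0 psdY hC hD) => Y0; move: nY; by rewrite Y0 normr0 ler10.
Qed.

End Concrete.

Section Fsig.
Variable R : realType.

Lemma fsig_ge0 (s t : R) : 0 < s -> 0 <= t -> 0 <= fsig s t.
Proof. by move=> s0 t0; rewrite /fsig subr_ge0 expR_le1 oppr_le0 divr_ge0 // ltW. Qed.

Lemma fsig_mono (s s' t : R) : 0 < s' -> s' <= s -> 0 <= t -> fsig s t <= fsig s' t.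
Proof.
move=> s'0 ss' t0; rewrite /fsig lerD2l lerN2 ler_expR lerN2.
apply: ler_wpM2l => //; rewrite lef_pV2 // posrE; exact: lt_le_trans ss'.
Qed.

Lemma fsig_le1 (s t : R) : 0 < s -> 0 <= t -> fsig s t <= (t != 0)%:R.
Proof.
move=> s0 t0; case: eqP => [->|_]; first by rewrite /fsig mul0r oppr0 expR0 subrr.
rewrite /fsig; have := expR_gt0 (- (t / s)); move=> h /=; lra.
Qed.

Lemma fsig_lb (s t : R) : 0 < s -> 0 <= t ->
  (t != 0)%:R - s * (if t == 0 then 0 else t^-1) <= fsig s t.
Proof.
move=> s0 t0; case: eqP => [->|/eqP tn0] /=.
  by rewrite /fsig mul0r oppr0 expR0 subrr mulr0 subrr.
have tp : 0 < t by rewrite lt_def tn0 t0.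
have yp : 0 < t / s by rewrite divr_gt0.
have h1 : t / s <= expR (t / s).
  by apply: le_trans (expR_ge1Dx _); rewrite lerDr.
have h2 : (expR (t / s))^-1 <= (t / s)^-1.
  by rewrite lef_pV2 // posrE expR_gt0.
rewrite invf_div in h2; rewrite /fsig expRN.
lra.
Qed.

Variables (n m : nat).

Definition Kinv (x : 'M[R]_(m, n)) : R :=
  \sum_(i < m) \sum_(j < n) (if `|x i j| == 0 then 0 else `|x i j|^-1).

Lemma fsum_ge0 s (x : 'M[R]_(m, n)) : 0 < s -> 0 <= fsum s x.
Proof. by move=> s0; apply: sumr_ge0 => i _; apply: sumr_ge0 => j _; exact: fsig_ge0. Qed.

Lemma fsum_mono s s' (x : 'M[R]_(m, n)) : 0 < s' -> s' <= s -> fsum s x <= fsum s' x.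
Proof.
move=> s0 ss; apply: ler_sum => i _; apply: ler_sum => j _; exact: fsig_mono.
Qed.

Lemma fsum_le_l0 s (x : 'M[R]_(m, n)) : 0 < s -> fsum s x <= (l0 x)%:R.
Proof.
move=> s0; rewrite /l0 natr_sum; apply: ler_sum => i _; rewrite natr_sum.
apply: ler_sum => j _; rewrite -normr_eq0; exact: fsig_le1.
Qed.

Lemma fsum_lb s (x : 'M[R]_(m, n)) : 0 < s -> (l0 x)%:R - s * Kinv x <= fsum s x.
Proof.
move=> s0; rewrite /l0 /Kinv natr_sum mulr_sumr -sumrB; apply: ler_sum => i _.
rewrite natr_sum mulr_sumr -sumrB; apply: ler_sum => j _; rewrite -normr_eq0.
exact: fsig_lb.
Qed.

Lemma fsum_cvg s (v : nat -> 'M[R]_(m, n)) Y : econv v Y ->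
  (fun k => fsum s (v k)) @ \oo --> fsum s Y.
Proof.
move=> hv; rewrite /fsum; apply: cvg_sum_ord => i; apply: cvg_sum_ord => j.
rewrite /fsig; apply: cvgB; first exact: cvg_cst.
apply: (continuous_cvg _ (@continuous_expR R _)).
apply: cvgN; apply: cvgM; last exact: cvg_cst.
exact: cvg_norm.
Qed.

End Fsig.

Section HsProps.
Variable R : realType.
Variables (n m M l q : nat).
Variables (A : 'I_M -> 'M[R]_n) (B2 : 'I_M -> 'M[R]_(n, m)).
Variables (B1 : 'M[R]_(n, l)) (C : 'M[R]_(q, n)) (D : 'M[R]_(q, m)).
Variables (gamma : R) (sigma : nat -> R).
Hypothesis hC : pd (C^T *m C).
Hypothesis hD : pd (D^T *m D).
Hypothesis g0 : 0 < gamma.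
Hypothesis s0 : forall i, 0 < sigma i.
Hypothesis smono : forall i, sigma i.+1 <= sigma i.
Hypothesis scvg : sigma @ \oo --> 0.

Let f := fun i => Hsig A B2 B1 C D gamma (sigma i).
Let F := Hl0 A B2 B1 C D gamma.

Lemma P_f0 j W : (0 <= f j W)%E.
Proof.
rewrite /f /Hsig r1_add; case: asboolP => [[hp _]|_]; last exact: leey.
rewrite lee_fin; apply: addr_ge0; first exact: inner_ge0.
by apply: mulr_ge0; [exact: ltW | exact: fsum_ge0].
Qed.

Lemma P_fmono j W : (f j W <= f j.+1 W)%E.
Proof.
rewrite /f /Hsig !r1_add; case: asboolP => _ //.
rewrite lee_fin lerD2l; apply: ler_wpM2l; first exact: ltW.
exact: fsum_mono.
Qed.

Lemma P_fleF j W : (f j W <= F W)%E.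
Proof.
rewrite /f /F /Hsig /Hl0 !r1_add; case: asboolP => _ //.
rewrite lee_fin lerD2l; apply: ler_wpM2l; first exact: ltW.
exact: fsum_le_l0.
Qed.

Lemma P_Fsup W (c : R) : (forall j, (f j W <= c%:E)%E) -> (F W <= c%:E)%E.
Proof.
move=> h; rewrite /F /Hl0 r1_add; case: asboolP => hf; last first.
  by have := h 0%N; rewrite /f /Hsig r1_add (asboolF hf) leye_eq.
have hj : forall j, inner C D W + gamma * fsum (sigma j) (Kx W) <= c.
  by move=> j; have := h j; rewrite /f /Hsig r1_add (asboolT hf) lee_fin.
rewrite lee_fin; set K := Kinv (Kx W).
apply: (le_lim_near (cvg_cst (inner C D W + gamma * (l0 (Kx W))%:R))) => e e0.
have hc : (fun j => gamma * (sigma j * K)) @ \oo --> 0.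
  rewrite -(mulr0 gamma); apply: cvgM; first exact: cvg_cst.
  rewrite -(mul0r K); apply: cvgM; [exact: scvg | exact: cvg_cst].
apply: filterS (cvgr_le 0 hc e e0) => j hjj.
have hlb := fsum_lb (Kx W) (s0 j).
have : gamma * ((l0 (Kx W))%:R - sigma j * K) <= gamma * fsum (sigma j) (Kx W).
  by apply: ler_wpM2l => //; exact: ltW.
rewrite mulrBr; have := hj j; lra.
Qed.

Lemma P_flsc j (u : nat -> 'M[R]_(n + m)) (X : 'M[R]_(n + m)) (c : R) :
  u @ \oo --> X ->
  (forall e, 0 < e -> \forall k \near \oo, (f j (u k) <= (c + e)%:E)%E) ->
  (f j X <= c%:E)%E.
Proof.
move=> hu h.
have hfe : \forall k \near \oo, feas A B2 B1 (u k).
  apply: filterS (h 1 ltr01) => k; rewrite /f /Hsig r1_add.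
  by case: asboolP => // _; rewrite leye_eq.
have fX := feas_closed hu hfe.
rewrite /f /Hsig r1_add (asboolT fX) lee_fin.
have eu := econv_of hu.
apply: (le_lim_near (g := fun k => inner C D (u k) + gamma * fsum (sigma j) (Kx (u k)))).
  apply: cvgD; first exact: inner_cvg.
  apply: cvgM; first exact: cvg_cst.
  apply: fsum_cvg; rewrite /Kx; apply: econv_mulr; exact: econv_mull.
move=> e e0; apply: filterS (filterI hfe (h e e0)) => k [hf hk].
by move: hk; rewrite /f /Hsig r1_add (asboolT hf) lee_fin.
Qed.

Lemma P_fcoer (c : R) : exists B, forall W, (f 0 W <= c%:E)%E -> `|W| <= B.
Proof.
have [B hB] := coer hC hD c; exists B => W; rewrite /f /Hsig r1_add.
case: asboolP => [hf|_]; last by rewrite leye_eq.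
rewrite lee_fin => hle; apply: hB; first exact: hf.1.
have : 0 <= gamma * fsum (sigma 0) (Kx W).
  by apply: mulr_ge0; [exact: ltW | exact: fsum_ge0].
lra.
Qed.

Lemma P_Fprop : (exists W, (r1 A B2 B1 C D W < +oo)%E) -> exists W, (F W < +oo)%E.
Proof.
move=> [W hW]; exists W; move: hW; rewrite /F /Hl0 /r1.
by case: asboolP => // _ _; exact: ltry.
Qed.

End HsProps.

Unset Implicit Arguments.

Theorem theorem25 (R : realType) (n m M l q : nat)
  (A : 'I_M -> 'M[R]_n) (B2 : 'I_M -> 'M[R]_(n, m))
  (B1 : 'M[R]_(n, l)) (C : 'M[R]_(q, n)) (D : 'M[R]_(q, m))
  (gamma : R) (sigma : nat -> R) :
  (0 < n)%N -> (0 < m)%N -> (0 < M)%N ->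
  C^T *m D = 0 -> pd (D^T *m D) -> pd (B1 *m B1^T) -> pd (C^T *m C) ->
  (exists W, (r1 A B2 B1 C D W < +oo)%E) ->
  0 < gamma ->
  (forall i, 0 < sigma i) -> (forall i, sigma i.+1 <= sigma i) ->
  sigma @ \oo --> 0 ->
  let Hs := fun i => Hsig A B2 B1 C D gamma (sigma i) in
  let H := Hl0 A B2 B1 C D gamma in
  (* 1 *)
  ((fun i => inf_of (Hs i)) @ \oo --> inf_of H)
  (* 2 *)
  /\ (exists N : set nat, finite_set (~` N) /\
        (forall v, N v -> argmin (Hs v) !=set0) /\
        bounded_in (\bigcup_(v in N) argmin (Hs v)) /\
        outer_limit (fun v => argmin (Hs v)) `<=` argmin H)
  (* 3 *)
  /\ (forall eps : nat -> R,
        (forall i, 0 <= eps i) -> (forall i, eps i.+1 <= eps i) ->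
        eps @ \oo --> 0 ->
        forall Wt : nat -> 'M[R]_(n + m),
        (forall i, eps_argmin (eps i) (Hs i) (Wt i)) ->
        bounded_in (range Wt) /\
        (forall X, cluster_point Wt X -> argmin H X)).
Proof.
move=> _ _ _ _ hD _ hC hprop g0 s0 smono scvg Hs H.
have BW := @BW_mx R (n + m) (n + m).
have f0 : forall j W, (0 <= Hs j W)%E by move=> j W; apply: P_f0.
have fmono : forall j W, (Hs j W <= Hs j.+1 W)%E by move=> j W; apply: P_fmono.
have fleF : forall j W, (Hs j W <= H W)%E by move=> j W; apply: P_fleF.
have Fsup : forall W (c : R), (forall j, (Hs j W <= c%:E)%E) -> (H W <= c%:E)%E.
  by move=> W c; apply: P_Fsup.
have flsc : forall j (u : nat -> 'M[R]_(n + m)) (X : 'M[R]_(n + m)) (c : R),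
    u @ \oo --> X ->
    (forall e, 0 < e -> \forall k \near \oo, (Hs j (u k) <= (c + e)%:E)%E) ->
    (Hs j X <= c%:E)%E.
  by move=> j u X c; apply: P_flsc.
have fcoer : forall c : R, exists B, forall W, (Hs 0%N W <= c%:E)%E -> `|W| <= B.
  by move=> c; apply: P_fcoer.
have Fprop : exists W, (H W < +oo)%E by apply: P_Fprop.
split; first exact: (item1 BW f0 fmono fleF Fsup flsc fcoer Fprop).
split; first exact: (item2 BW f0 fmono fleF Fsup flsc fcoer Fprop).
exact: (item3 f0 fmono fleF Fsup flsc fcoer Fprop).
Qed.
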